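(* Assume the payoffs are normalized with $T=1$, $S=0$. Assume X uses a memory-one strategy $\mathbf p$ whose X Press-Dyson vector is $\mathbf p-(1,1,0,0)=\gamma(\bar\alpha\mathbf S_X+\bar\beta\mathbf S_Y+\mathbf 1)$ with $\gamma>0$. Let $-Z^{-1}=\bar\alpha+\bar\beta$, so that $P\le Z\le R$. Then for any strategy pattern played by Y and any associated limit distribution, $$\bar\alpha Z(s_X-s_Y)=s_Y-Z.$$ Furthermore, with $\kappa=\bar\alpha Z/(1+\bar\alpha Z)$ one has $\kappa<1$, $\kappa$ has the same sign as $\bar\alpha$, and for any strategy pattern played by Y and any associated limit distribution, $$\kappa(s_X-Z)=s_Y-Z.$$
   Context: Iterated Prisoner's Dilemma with normalized payoffs $T=1>R>P>S=0$ and $2R>1$; outcomes ordered $cc,cd,dc,dd$ (first letter X's play, second Y's; $c$ = cooperate, $d$ = defect); payoff vectors $\mathbf S_X=(R,0,1,P)$, $\mathbf S_Y=(R,1,0,P)$, $\mathbf 1=(1,1,1,1)$. A memory-one strategy for X is $\mathbf p\in[0,1]^4$, $p_i$ the probability X plays $c$ after outcome $i$ of the previous round. A strategy pattern for Y is any (possibly randomized, history-dependent) rule for Y's play. With $\mathbf v^n$ the distribution of the outcome of round $n$, a limit distribution is any limit point $\mathbf v$ of the Cesàro averages $\frac1n\sum_{k\le n}\mathbf v^k$, with expected payoffs $s_X=\langle\mathbf v\cdot\mathbf S_X\rangle$, $s_Y=\langle\mathbf v\cdot\mathbf S_Y\rangle$. *)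

(* Defs.v *)
From mathcomp Require Import all_boot all_order all_algebra.
From mathcomp Require Import reals.
Set Implicit Arguments. Unset Strict Implicit. Unset Printing Implicit Defensive.
Import Order.TTheory GRing.Theory Num.Theory.
Local Open Scope ring_scope.

(* Outcomes of one round, indexed 0,1,2,3 = cc, cd, dc, dd
   (first letter X's play, second Y's). *)
Definition outcome := 'I_4.

Definition X_coop (i : outcome) : bool := (val i < 2)%N.
Definition Y_coop (i : outcome) : bool := ~~ odd (val i).

Definition vec4 (R : Type) (a b c d : R) : outcome -> R :=
  fun i => match val i with 0 => a | 1 => b | 2 => c | _ => d end%N.

Section Game.
Variable R : realType.

(* Payoff vectors with T = 1, S = 0. *)
Definition SX (Rw Pw : R) : outcome -> R := vec4 Rw 0 1 Pw.
Definition SY (Rw Pw : R) : outcome -> R := vec4 Rw 1 0 Pw.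
Definition one4 : outcome -> R := fun _ => 1.
Definition e12 : outcome -> R := vec4 1 1 0 0.

Definition dot4 (u w : outcome -> R) : R := \sum_(i : outcome) u i * w i.

Definition act_prob (c : R) (coop : bool) : R := if coop then c else 1 - c.

(* X plays the memory-one strategy p, with initial cooperation probability p0;
   Y plays the behavioural strategy q : history -> prob. of cooperating.
   A history is the sequence of past outcomes, oldest first. *)
Definition step (p : outcome -> R) (p0 : R) (q : seq outcome -> R)
    (hist : seq outcome) (i : outcome) : R :=
  act_prob (if hist is o :: t then p (last o t) else p0) (X_coop i) *
  act_prob (q hist) (Y_coop i).

Fixpoint hprob_from p p0 q (prefix h : seq outcome) : R :=
  match h with
  | [::] => 1
  | o :: t => step p p0 q prefix o * hprob_from p p0 q (rcons prefix o) t
  end.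

(* v^(n+1): distribution of the outcome of round n+1. *)
Definition round_dist p p0 q (n : nat) (i : outcome) : R :=
  \sum_(h : n.-tuple outcome) hprob_from p p0 q [::] h * step p p0 q h i.

(* Cesàro average (1/n) sum_{k <= n} v^k, for n >= 1. *)
Definition cesaro p p0 q (n : nat) (i : outcome) : R :=
  (n%:R)^-1 * \sum_(k < n) round_dist p p0 q k i.

Definition limit_distribution p p0 q (v : outcome -> R) : Prop :=
  forall eps : R, 0 < eps -> forall N : nat, exists n : nat,
    (N < n)%N /\ forall i : outcome, `|cesaro p p0 q n i - v i| < eps.

Definition is_memory_one (p : outcome -> R) : Prop :=
  forall i, 0 <= p i <= 1.

Definition is_strategy_pattern (q : seq outcome -> R) : Prop :=
  forall h, 0 <= q h <= 1.

End Game.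

(* Main.v *)
Require Import Defs.
From mathcomp Require Import all_boot all_order all_algebra.
From mathcomp Require Import reals.
From mathcomp Require Import ring lra.
Import Order.TTheory GRing.Theory Num.Theory.
Local Open Scope ring_scope.
Set Implicit Arguments. Unset Strict Implicit.

Definition o0 : outcome := @Ordinal 4 0 isT.
Definition o1 : outcome := @Ordinal 4 1 isT.
Definition o2 : outcome := @Ordinal 4 2 isT.
Definition o3 : outcome := @Ordinal 4 3 isT.

Lemma sum4 (R : realType) (F : outcome -> R) :
  \sum_(i : outcome) F i = F o0 + F o1 + F o2 + F o3.
Proof.
rewrite (@big_ord_recl _ _ _ 3) (@big_ord_recl _ _ _ 2) (@big_ord_recl _ _ _ 1)
  (@big_ord_recl _ _ _ 0) big_ord0 addr0 !addrA.
by congr (_ + _ + _ + _); congr F; apply: val_inj.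
Qed.

Lemma big_tuple_cons (R : realType) (T : finType) n (F : seq T -> R) :
  \sum_(t : n.+1.-tuple T) F t = \sum_(o : T) \sum_(t : n.-tuple T) F (o :: t).
Proof.
rewrite pair_big /=.
rewrite (reindex (fun x : T * n.-tuple T => [tuple of x.1 :: x.2])) /=; last first.
  apply: onW_bij; exists (fun t : n.+1.-tuple T => (thead t, [tuple of behead t])).
    by case=> a t /=; congr pair; apply: val_inj.
  by move=> t /=; rewrite [RHS]tuple_eta.
by apply: eq_bigr => -[a t].
Qed.

Lemma big_tuple0 (R : realType) (T : finType) (F : seq T -> R) :
  \sum_(t : 0.-tuple T) F t = F [::].
Proof.
rewrite (big_pred1 [tuple]) //= => t; rewrite (tuple0 t); exact: (esym (eqxx _)).
Qed.

Definition xprob (R : realType) (p : outcome -> R) (p0 : R) (h : seq outcome) :=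
  if h is o :: t then p (last o t) else p0.

Definition rdf (R : realType) p p0 q (prefix : seq outcome) n (i : outcome) : R :=
  \sum_(t : n.-tuple outcome) hprob_from p p0 q prefix t * step p p0 q (prefix ++ t) i.

Lemma rdf0 (R : realType) p p0 q prefix i :
  @rdf R p p0 q prefix 0 i = step p p0 q prefix i.
Proof. rewrite /rdf. rewrite (big_tuple0 (fun t : seq outcome => hprob_from p p0 q prefix t * step p p0 q (prefix ++ t) i)). by rewrite /= mul1r cats0. Qed.

Lemma rdfS (R : realType) p p0 q prefix n i :
  @rdf R p p0 q prefix n.+1 i =
  \sum_o step p p0 q prefix o * rdf p p0 q (rcons prefix o) n i.
Proof.
rewrite /rdf (big_tuple_cons _ (fun t : seq outcome => hprob_from p p0 q prefix t * step p p0 q (prefix ++ t) i)); apply: eq_bigr => o _; rewrite mulr_sumr.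
by apply: eq_bigr => t _ /=; rewrite -cat_rcons mulrA.
Qed.

Lemma step_sum (R : realType) p p0 q h :
  \sum_i @step R p p0 q h i = 1.
Proof. rewrite sum4 /step /act_prob /=; ring. Qed.

Lemma step_e12 (R : realType) p p0 q h :
  \sum_i @step R p p0 q h i * e12 R i = xprob p p0 h.
Proof. rewrite sum4 /step /act_prob /e12 /vec4 /xprob /=; case: h => [|a l]; rewrite /=; ring. Qed.

Lemma hprob_sum (R : realType) p p0 q n : forall prefix,
  \sum_(t : n.-tuple outcome) @hprob_from R p p0 q prefix t = 1.
Proof.
elim: n => [|n IH] prefix; first by rewrite (big_tuple0 (hprob_from p p0 q prefix)).
rewrite (big_tuple_cons _ (hprob_from p p0 q prefix)) -(step_sum p p0 q prefix); apply: eq_bigr => o _ /=.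
by rewrite -mulr_sumr IH mulr1.
Qed.

Lemma rdf_sum (R : realType) p p0 q prefix n :
  \sum_i @rdf R p p0 q prefix n i = 1.
Proof.
rewrite /rdf exchange_big /= -(hprob_sum p p0 q n prefix); apply: eq_bigr => t _.
by rewrite -mulr_sumr step_sum mulr1.
Qed.

Lemma act_prob_ge0 (R : realType) (c : R) b : 0 <= c <= 1 -> 0 <= act_prob c b.
Proof. by case/andP=> h1 h2; case: b => /=; rewrite ?subr_ge0. Qed.

Lemma step_ge0 (R : realType) p p0 q h i :
  is_memory_one p -> 0 <= p0 <= 1 -> is_strategy_pattern q ->
  0 <= @step R p p0 q h i.
Proof.
move=> hp hp0 hq; rewrite /step; apply: mulr_ge0; apply: act_prob_ge0 => //.
by case: h => [|a l].
Qed.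

Lemma hprob_ge0 (R : realType) p p0 q t :
  is_memory_one p -> 0 <= p0 <= 1 -> is_strategy_pattern q ->
  forall prefix, 0 <= @hprob_from R p p0 q prefix t.
Proof.
move=> hp hp0 hq; elim: t => [|o t IH] prefix /=; first by [].
by apply: mulr_ge0; [apply: step_ge0 | apply: IH].
Qed.

Lemma rdf_ge0 (R : realType) p p0 q prefix n i :
  is_memory_one p -> 0 <= p0 <= 1 -> is_strategy_pattern q ->
  0 <= @rdf R p p0 q prefix n i.
Proof.
move=> hp hp0 hq; apply: sumr_ge0 => t _.
by apply: mulr_ge0; [apply: hprob_ge0 | apply: step_ge0].
Qed.

Lemma rdfS_w (R : realType) p p0 q prefix n (w : outcome -> R) :
  \sum_i @rdf R p p0 q prefix n.+1 i * w i =
  \sum_o step p p0 q prefix o * \sum_i rdf p p0 q (rcons prefix o) n i * w i.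
Proof.
under eq_bigr => i _ do rewrite rdfS mulr_suml.
rewrite exchange_big /=; apply: eq_bigr => o _; rewrite mulr_sumr.
by apply: eq_bigr => i _; rewrite mulrA.
Qed.

Lemma key (R : realType) p p0 q n : forall prefix,
  \sum_i @rdf R p p0 q prefix n.+1 i * e12 R i =
  \sum_i rdf p p0 q prefix n i * p i.
Proof.
elim: n => [|n IH] prefix.
  rewrite rdfS_w; apply: eq_bigr => o _.
  under eq_bigr => i _ do rewrite rdf0.
  rewrite step_e12 rdf0; congr (_ * _).
  by case: prefix => [|a l] //=; rewrite last_rcons.
rewrite rdfS_w rdfS_w; apply: eq_bigr => o _; by rewrite IH.
Qed.

Lemma lim_dot (R : realType) p p0 q (v w : outcome -> R) a C :
  0 <= C -> limit_distribution p p0 q v ->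
  (forall n, (0 < n)%N -> `|dot4 (cesaro p p0 q n) w - a| <= C / n%:R) ->
  dot4 v w = a.
Proof.
move=> C0 hv hc; apply/eqP; rewrite -subr_eq0 -normr_eq0.
set d := `|_|.
have := normr_ge0 (dot4 v w - a); rewrite -/d le_eqVlt => /orP[/eqP<-//|dpos].
exfalso.
set M := 1 + \sum_i `|w i|.
have M1 : 1 <= M by rewrite lerDl sumr_ge0 // => i _; exact: normr_ge0.
have Mpos : 0 < M by apply: lt_le_trans M1.
have epos : 0 < d / (2 * M) by apply: divr_gt0 => //; apply: mulr_gt0.
have [n [Nn hn]] := hv _ epos (Num.Def.archi_bound (2 * C / d)).
have n0 : (0 < n)%N by apply: leq_ltn_trans Nn.
have npos : 0 < n%:R :> R by rewrite ltr0n.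
have h1 : `|dot4 v w - dot4 (cesaro p p0 q n) w| <= d / (2 * M) * \sum_i `|w i|.
  rewrite /dot4 -sumrB mulr_sumr; apply: le_trans (ler_norm_sum _ _ _) _.
  apply: ler_sum => i _; rewrite -mulrBl normrM ler_wpM2r //.
  by rewrite distrC; apply: ltW.
have h2 : d / (2 * M) * \sum_i `|w i| <= d / 2.
  rewrite -mulrA ler_pM2l // mulrC ler_pdivrMr ?mulr_gt0 // mulrA mulVf ?pnatr_eq0 //.
  by rewrite mul1r /M lerDr.
have h3 : C / n%:R < d / 2.
  rewrite ltr_pdivrMr // mulrAC ltr_pdivlMr //.
  have : 2 * C / d < n%:R.
    apply: lt_le_trans (archi_boundP _) _.
      by apply: divr_ge0; [apply: mulr_ge0 | apply: ltW].
    by rewrite ler_nat; apply: ltnW.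
  by rewrite ltr_pdivrMr // => h; rewrite mulrC [d * _]mulrC.
have := hc n n0.
have : d <= `|dot4 v w - dot4 (cesaro p p0 q n) w| + `|dot4 (cesaro p p0 q n) w - a|.
  rewrite /d; have -> : dot4 v w - a = (dot4 v w - dot4 (cesaro p p0 q n) w) + (dot4 (cesaro p p0 q n) w - a).
    by rewrite addrA subrK.
  exact: ler_normD.
move=> hd h4.
have : d < d / 2 + d / 2 by apply: le_lt_trans hd _; apply: ler_ltD => //; [apply: le_trans h1 h2 | apply: le_lt_trans h4 h3].
by rewrite -splitr ltxx.
Qed.

Lemma rd_rdf (R : realType) p p0 q k i :
  @round_dist R p p0 q k i = rdf p p0 q [::] k i.
Proof. by []. Qed.

Lemma c_bounds (R : realType) p p0 q k :
  is_memory_one p -> 0 <= p0 <= 1 -> is_strategy_pattern q ->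
  0 <= \sum_i @rdf R p p0 q [::] k i * e12 R i <= 1.
Proof.
move=> hp hp0 hq.
have := rdf_sum p p0 q [::] k; rewrite !sum4 /e12 /vec4 /=.
have := rdf_ge0 [::] k o0 hp hp0 hq; have := rdf_ge0 [::] k o1 hp hp0 hq.
have := rdf_ge0 [::] k o2 hp hp0 hq; have := rdf_ge0 [::] k o3 hp hp0 hq.
move=> *; apply/andP; split; lra.
Qed.

Lemma ces_pd (R : realType) p p0 q n :
  is_memory_one p -> 0 <= p0 <= 1 -> is_strategy_pattern q -> (0 < n)%N ->
  `|dot4 (@cesaro R p p0 q n) (fun i => p i - e12 R i) - 0| <= 1 / n%:R.
Proof.
move=> hp hp0 hq n0.
set c := fun k => \sum_i rdf p p0 q [::] k i * e12 R i.
have -> : dot4 (cesaro p p0 q n) (fun i => p i - e12 R i) = n%:R^-1 * (c n - c 0%N).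
  rewrite /dot4 /cesaro.
  under eq_bigr => i _ do rewrite -mulrA mulr_suml.
  rewrite -mulr_sumr exchange_big /=; congr (_ * _).
  rewrite -(telescope_sumr (fun k => c k) (leq0n n)) big_mkord.
  apply: eq_bigr => k _; rewrite /c key -sumrB; apply: eq_bigr => i _.
  by rewrite rd_rdf mulrBr.
rewrite subr0 normrM mul1r ger0_norm ?invr_ge0 ?ler0n //.
rewrite -[X in _ <= X]mulr1 ler_wpM2l ?invr_ge0 ?ler0n //.
have := c_bounds n hp hp0 hq; have := c_bounds 0 hp hp0 hq.
rewrite -/(c n) -/(c 0%N) => /andP[h1 h2] /andP[h3 h4].
by rewrite ler_norml; apply/andP; split; lra.
Qed.

Lemma ces_one (R : realType) p p0 q n :
  (0 < n)%N -> `|dot4 (@cesaro R p p0 q n) (one4 R) - 1| <= 0 / n%:R.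
Proof.
move=> n0.
have -> : dot4 (cesaro p p0 q n) (one4 R) = 1; last by rewrite subrr normr0 mul0r.
rewrite /dot4 /cesaro.
under eq_bigr => i _ do rewrite -mulrA mulr_suml.
rewrite -mulr_sumr exchange_big /=.
have hk : forall k, \sum_i round_dist p p0 q k i * one4 R i = 1.
  move=> k; rewrite -(rdf_sum p p0 q [::] k); apply: eq_bigr => i _.
  by rewrite /one4 mulr1.
under eq_bigr => k _ do rewrite hk.
rewrite sumr_const card_ord mulVf // pnatr_eq0 -lt0n //.
Qed.

Lemma press_dyson (R : realType) (Rw Pw : R) (p : outcome -> R) alpha beta gamma p0 q v :
  is_memory_one p -> 0 < gamma ->
  (forall i, p i - e12 R i =
     gamma * (alpha * SX Rw Pw i + beta * SY Rw Pw i + one4 R i)) ->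
  0 <= p0 <= 1 -> is_strategy_pattern q -> limit_distribution p p0 q v ->
  alpha * dot4 v (SX Rw Pw) + beta * dot4 v (SY Rw Pw) + 1 = 0.
Proof.
move=> hp hg H hp0 hq hv.
have hsum : dot4 v (one4 R) = 1.
  apply: (lim_dot (C := 0) _ hv) => // n n0; exact: ces_one.
have hpd : dot4 v (fun i => p i - e12 R i) = 0.
  apply: (lim_dot (C := 1) _ hv) => // n n0; exact: ces_pd.
have E : gamma * (alpha * dot4 v (SX Rw Pw) + beta * dot4 v (SY Rw Pw) + 1) = 0.
  have -> : gamma * (alpha * dot4 v (SX Rw Pw) + beta * dot4 v (SY Rw Pw) + 1) =
     dot4 v (fun i => p i - e12 R i) + gamma * (1 - dot4 v (one4 R)).
    rewrite /dot4 !sum4 /= !H /SX /SY /one4 /vec4 /=; ring.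
  by rewrite hpd hsum subrr mulr0 addr0.
by move/eqP: E; rewrite mulf_eq0 gt_eqF //= => /eqP.
Qed.

Theorem proposition3p2 (R : realType) (Rw Pw : R) (p : outcome -> R)
    (alpha beta gamma : R) :
  0 < Pw -> Pw < Rw -> Rw < 1 -> 1 < 2 * Rw ->
  is_memory_one p ->
  0 < gamma ->
  (forall i, p i - e12 R i =
     gamma * (alpha * SX Rw Pw i + beta * SY Rw Pw i + one4 R i)) ->
  let Z := - (alpha + beta)^-1 in
  (Pw <= Z <= Rw) /\
  (forall (p0 : R) (q : seq outcome -> R) (v : outcome -> R),
     0 <= p0 <= 1 -> is_strategy_pattern q ->
     limit_distribution p p0 q v ->
     alpha * Z * (dot4 v (SX Rw Pw) - dot4 v (SY Rw Pw))
       = dot4 v (SY Rw Pw) - Z) /\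
  (let kappa := alpha * Z / (1 + alpha * Z) in
   1 + alpha * Z != 0 /\ kappa < 1 /\ Num.sg kappa = Num.sg alpha /\
   (forall (p0 : R) (q : seq outcome -> R) (v : outcome -> R),
     0 <= p0 <= 1 -> is_strategy_pattern q ->
     limit_distribution p p0 q v ->
     kappa * (dot4 v (SX Rw Pw) - Z) = dot4 v (SY Rw Pw) - Z)).
Proof.
move=> hP hPR hR1 h2R hp hg H Z.
have H0 := H o0; have H1 := H o1; have H2 := H o2; have H3 := H o3.
rewrite /SX /SY /e12 /one4 /vec4 /= in H0 H1 H2 H3.
have := hp o0; have := hp o1; have := hp o2; have := hp o3.
move=> /andP[a3 b3] /andP[a2 b2] /andP[a1 b1] /andP[a0 b0].
have F1 : (alpha + beta) * Rw + 1 <= 0 by nra.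
have F4 : 0 <= (alpha + beta) * Pw + 1 by nra.
have F2 : beta + 1 <= 0 by nra.
have F3 : 0 <= alpha + 1 by nra.
have sneg : alpha + beta < 0 by nra.
have Zs : Z * (alpha + beta) = -1 by rewrite /Z mulNr mulVf ?lt_eqF.
have Zpos : 0 < Z by nra.
have PZ : Pw <= Z by nra.
have ZR : Z <= Rw by nra.
have part2 : forall (p0 : R) (q : seq outcome -> R) (v : outcome -> R),
     0 <= p0 <= 1 -> is_strategy_pattern q ->
     limit_distribution p p0 q v ->
     alpha * Z * (dot4 v (SX Rw Pw) - dot4 v (SY Rw Pw))
       = dot4 v (SY Rw Pw) - Z.
  move=> p0 q v hp0 hq hv.
  have E := press_dyson hp hg H hp0 hq hv.
  set sX := dot4 v (SX Rw Pw) in E *; set sY := dot4 v (SY Rw Pw) in E *.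
  apply/eqP; rewrite -subr_eq0; apply/eqP.
  transitivity (Z * (alpha * sX + beta * sY + 1) - sY * (Z * (alpha + beta) + 1)).
    ring.
  by rewrite E Zs mulr0 addNr mulr0 subrr.
have Dpos : 0 < 1 + alpha * Z by nra.
split; first by rewrite PZ ZR.
split; first exact: part2.
move=> kappa; split; first by rewrite gt_eqF.
split; first by rewrite /kappa ltr_pdivrMr // mul1r ltrDr ltr01.
split.
  by rewrite /kappa sgrM sgrV (gtr0_sg Dpos) mulr1 sgrM (gtr0_sg Zpos) mulr1.
move=> p0 q v hp0 hq hv.
have E := part2 p0 q v hp0 hq hv.
set sX := dot4 v (SX Rw Pw) in E *; set sY := dot4 v (SY Rw Pw) in E *.
have E2 : alpha * Z * (sX - Z) = (1 + alpha * Z) * (sY - Z).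
  transitivity (alpha * Z * (sX - sY) + alpha * Z * sY - alpha * Z * Z); first ring.
  by rewrite E; ring.
by rewrite /kappa mulrAC E2 [(1 + _) * _]mulrC mulfK ?gt_eqF.
Qed.
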